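(* Let $F,\theta \geq 1$ be integers with $F > 2\theta$. For $\rho \in [0,2^{-F})$, let $\eta_0(x)$, $\eta_0(x+1)$ be independent random elements of $\{0,1\}^F$, each with $P(\eta_0 = u) = 1/2 - (2^{F-1}-1)\rho$ for $u \in \{u_-,u_+\}$ and $P(\eta_0 = u) = \rho$ otherwise, where $u_- = (0,\ldots,0)$, $u_+ = (1,\ldots,1)$. Let $\zeta = H(\eta_0(x),\eta_0(x+1))$ and $\phi = -\zeta$ if $\zeta \leq \theta$, $\phi = \zeta - 2\theta$ if $\zeta > \theta$. Then there exists $\rho_0 > 0$ such that $E\phi > 0$ for all $\rho \in (0,\rho_0)$.
   Context: $H(u,v) = \#\{i : u_i \neq v_i\}$ denotes the Hamming distance on $\{0,1\}^F$. *)

(* Defs.v *)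
From mathcomp Require Import all_boot all_order all_algebra.
Set Implicit Arguments. Unset Strict Implicit. Unset Printing Implicit Defensive.
Import Order.TTheory GRing.Theory Num.Theory.
Local Open Scope ring_scope.

Definition cube (F : nat) := {ffun 'I_F -> bool}.

Definition hamming (F : nat) (u v : cube F) : nat := #|[set i | u i != v i]|.

Definition u_minus (F : nat) : cube F := [ffun _ => false].
Definition u_plus (F : nat) : cube F := [ffun _ => true].

Definition pmf (R : fieldType) (F : nat) (rho : R) (u : cube F) : R :=
  if (u == u_minus F) || (u == u_plus F)
  then (2 : R)^-1 - ((2 ^ (F.-1) - 1)%N)%:R * rho
  else rho.

Definition phi (R : fieldType) (theta zeta : nat) : R :=
  if (zeta <= theta)%N then - (zeta%:R) else zeta%:R - (2 * theta)%:R.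

Definition Ephi (R : fieldType) (F theta : nat) (rho : R) : R :=
  \sum_(u : cube F) \sum_(v : cube F)
     pmf rho u * pmf rho v * phi R theta (hamming u v).

(* Main.v *)
Require Import Defs.
From mathcomp Require Import all_boot all_order all_algebra.
From mathcomp Require Import ring lra.
Import Order.TTheory GRing.Theory Num.Theory.
Local Open Scope ring_scope.

Section S.
Variables (R : realFieldType) (F theta : nat).

Definition ext (u : cube F) := (u == u_minus F) || (u == u_plus F).
Definition p0 (u : cube F) : R := if ext u then 2^-1 else 0.
Definition dd (u : cube F) : R := if ext u then - ((2 ^ (F.-1) - 1)%N)%:R else 1.

Lemma pmfE rho u : pmf rho u = p0 u + rho * dd u.
Proof. rewrite /pmf /p0 /dd -/(ext u); case: (ext u); ring. Qed.

Definition cA : R := \sum_(u : cube F) \sum_(v : cube F) p0 u * p0 v * phi R theta (hamming u v).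
Definition cB : R := \sum_(u : cube F) \sum_(v : cube F)
   (p0 u * dd v + dd u * p0 v) * phi R theta (hamming u v).
Definition cC : R := \sum_(u : cube F) \sum_(v : cube F) dd u * dd v * phi R theta (hamming u v).

Lemma EphiE rho : Ephi F theta rho = cA + rho * cB + rho ^+ 2 * cC.
Proof.
rewrite /Ephi /cA /cB /cC !mulr_sumr -!big_split; apply eq_bigr => u _.
rewrite !mulr_sumr -!big_split; apply eq_bigr => v _.
rewrite !pmfE /=; ring.
Qed.

Hypothesis F1 : (1 <= F)%N.

Lemma pm_neq : u_plus F != u_minus F.
Proof.
apply/eqP => /ffunP /(_ (Ordinal F1)); rewrite !ffunE; discriminate.
Qed.

Lemma sum_p0 (X : cube F -> R) :
  \sum_u p0 u * X u = 2^-1 * (X (u_minus F) + X (u_plus F)).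
Proof.
rewrite (bigD1 (u_minus F)) //= (bigD1 (u_plus F)) /=; last by rewrite pm_neq.
rewrite big1 ?addr0; last first.
  move=> u /andP[Hp Hm]; rewrite /p0 /ext (negbTE Hp) (negbTE Hm) /=; ring.
rewrite /p0 /ext eqxx /= eqxx orbT; ring.
Qed.

Lemma ham0 (u : cube F) : hamming u u = 0%N.
Proof.
rewrite /hamming; apply/eqP; rewrite cards_eq0; apply/eqP/setP => i.
by rewrite !inE eqxx.
Qed.



Lemma hamMP : hamming (u_minus F) (u_plus F) = F.
Proof.
rewrite /hamming (_ : [set i | _] = [set: 'I_F]) ?cardsT ?card_ord //.
by apply/setP => i; rewrite !inE !ffunE.
Qed.

Lemma hamPM : hamming (u_plus F) (u_minus F) = F.
Proof.
rewrite /hamming (_ : [set i | _] = [set: 'I_F]) ?cardsT ?card_ord //.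
by apply/setP => i; rewrite !inE !ffunE.
Qed.

Hypothesis Ht : (2 * theta < F)%N.

Lemma cA_gt0 : 0 < cA.
Proof.
rewrite /cA.
under eq_bigr => u _ do under eq_bigr => v _ do rewrite -mulrA.
under eq_bigr => u _ do rewrite -mulr_sumr.
rewrite sum_p0 !sum_p0 !ham0 hamMP hamPM.
have Hphi0 : phi R theta 0 = 0 by rewrite /phi leq0n oppr0.
have HphiF : 0 < phi R theta F.
  rewrite /phi; have -> : (F <= theta)%N = false.
    by apply/negbTE; rewrite -ltnNge; apply: leq_ltn_trans Ht; rewrite leq_pmull.
  by rewrite subr_gt0 ltr_nat.
rewrite Hphi0; lra.
Qed.

End S.

Theorem lemma10 (R : realFieldType) (F theta : nat) :
  (1 <= F)%N -> (1 <= theta)%N -> (2 * theta < F)%N ->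
  exists rho0 : R, 0 < rho0 /\
    forall rho : R, 0 < rho -> rho < rho0 -> rho < ((2 ^ F)%N%:R)^-1 ->
      0 < Ephi F theta rho.
Proof.
move=> F1 _ Ht.
have HA := @cA_gt0 R F theta F1 Ht.
set A := cA R F theta in HA *.
set B := cB R F theta; set C := cC R F theta.
set M : R := `|B| + `|C| + 1.
have HM : 0 < M by rewrite /M; have := normr_ge0 B; have := normr_ge0 C; lra.
exists (Num.min 1 (A / M)); split.
  by rewrite lt_min ltr01 divr_gt0.
move=> rho r0 rlt _; move: rlt; rewrite lt_min => /andP[r1 rA].
rewrite EphiE -/A -/B -/C.
have h1 : rho * M < A by rewrite -ltr_pdivlMr.
have h2 : - `|B| <= B by rewrite lerNnormlW.
have h3 : - `|C| <= C by rewrite lerNnormlW.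
have h4 : rho * (- `|B|) <= rho * B by rewrite ler_wpM2l // ltW.
have h5 : rho ^+ 2 * (- `|C|) <= rho ^+ 2 * C by rewrite ler_wpM2l // exprn_ge0 // ltW.
have h6 : rho ^+ 2 * `|C| <= rho * `|C|.
  by rewrite ler_wpM2r // expr2 ger_pMr // ltW.
rewrite /M in h1; lra.
Qed.
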